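(* For all integers $n \geq 3$ and $r \geq 3$, the graphs $K_n$ and $K_n + K_{n-1}$ are $r$-Ramsey equivalent; that is, a graph $G$ has the property that every edge-colouring of $G$ with $r$ colours contains a monochromatic copy of $K_n$ if and only if every edge-colouring of $G$ with $r$ colours contains a monochromatic copy of $K_n + K_{n-1}$.
   Context: All graphs are finite and simple. $K_m$ denotes the complete graph on $m$ vertices, and $K_n + K_{n-1}$ denotes the vertex-disjoint union of a copy of $K_n$ and a copy of $K_{n-1}$. For an integer $r \geq 2$, a graph $G$ is an $r$-Ramsey graph for a graph $H$ if every colouring of the edges of $G$ with $r$ colours admits a monochromatic copy of $H$ (a copy of $H$ as a subgraph of $G$ all of whose edges receive the same colour). Two graphs $H_1, H_2$ are $r$-Ramsey equivalent if every $r$-Ramsey graph for $H_1$ is an $r$-Ramsey graph for $H_2$, and vice versa. *)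

(* Defs.v *)
From mathcomp Require Import all_boot.
Set Implicit Arguments. Unset Strict Implicit. Unset Printing Implicit Defensive.

Record sgraph := SGraph {
  svert : finType;
  sadj : rel svert;
  sadj_sym : symmetric sadj;
  sadj_irr : irreflexive sadj }.

(* An r-edge-colouring of G: a symmetric colour assignment to pairs of vertices;
   only its values on edges matter. *)
Definition edge_colouring (G : sgraph) (r : nat) :=
  { c : svert G -> svert G -> 'I_r | forall x y, c x y = c y x }.

Definition mono_copy (H G : sgraph) (r : nat) (c : edge_colouring G r) : Prop :=
  exists (k : 'I_r) (f : svert H -> svert G), injective f /\
    forall a b, sadj a b -> sadj (f a) (f b) /\ sval c (f a) (f b) = k.

Definition ramsey (G H : sgraph) (r : nat) : Prop :=
  forall c : edge_colouring G r, mono_copy H c.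

Definition ramsey_equiv (H1 H2 : sgraph) (r : nat) : Prop :=
  forall G : sgraph, ramsey G H1 r <-> ramsey G H2 r.

Definition Kadj (m : nat) : rel 'I_m := fun x y => x != y.
Lemma Kadj_sym m : symmetric (Kadj (m:=m)).
Proof. by move=> x y; rewrite /Kadj eq_sym. Qed.
Lemma Kadj_irr m : irreflexive (Kadj (m:=m)).
Proof. by move=> x; rewrite /Kadj eqxx. Qed.
Definition K (m : nat) : sgraph := SGraph (@Kadj_sym m) (@Kadj_irr m).

Definition uadj (G1 G2 : sgraph) : rel (svert G1 + svert G2) :=
  fun x y => match x, y with
             | inl a, inl b => sadj a b
             | inr a, inr b => sadj a b
             | _, _ => false end.
Lemma uadj_sym G1 G2 : symmetric (@uadj G1 G2).
Proof. by case=> a [] b //=; apply: sadj_sym. Qed.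
Lemma uadj_irr G1 G2 : irreflexive (@uadj G1 G2).
Proof. by case=> a /=; apply: sadj_irr. Qed.
Definition gunion (G1 G2 : sgraph) : sgraph :=
  SGraph (@uadj_sym G1 G2) (@uadj_irr G1 G2).

(* Main.v *)
Require Import Defs.
From mathcomp Require Import all_boot zify.
Set Implicit Arguments. Unset Strict Implicit. Unset Printing Implicit Defensive.

Definition psi_good (n r : nat) (psi : 'I_r * 'I_n -> 'I_r * 'I_n -> 'I_r) :=
  [/\ (forall p q, psi p q = psi q p),
      (forall i t u, t != u -> psi (i, t) (i, u) != i) &
      (forall k (h : 'I_n -> 'I_r * 'I_n), injective h ->
         ~ (forall a b, a != b -> psi (h a) (h b) = k))].

Definition toI r (hr : 3 <= r) (x : nat) : 'I_r :=
  insubd (Ordinal (leq_trans (isT : 1 <= 3) hr)) x.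

Lemma toI_val r (hr : 3 <= r) x : x < 3 -> val (toI hr x) = x.
Proof. by move=> hx; rewrite /toI val_insubd (leq_trans hx hr). Qed.

Definition aa (i : nat) := if i == 0 then 1 else 0.
Definition bb (i : nat) := if i == 2 then 1 else 2.

Definition psi4 n r (hr : 3 <= r) (p q : 'I_r * 'I_n) : 'I_r :=
  if p.1 != q.1 then (if p.1 < q.1 then p.1 else q.1)
  else if p.2 %% (n - 2) != q.2 %% (n - 2) then toI hr (aa p.1) else toI hr (bb p.1).

Definition pi4 n r (k : 'I_r) (p : 'I_r * 'I_n) : nat :=
  if val k == val p.1 then 0 else if val k == aa p.1 then 1 + p.2 %% (n - 2)
  else if val k == bb p.1 then 1 + p.2 %/ (n - 2) else 1.

Lemma aa_lt i : aa i < 3. Proof. by rewrite /aa; case: ifP. Qed.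
Lemma bb_lt i : bb i < 3. Proof. by rewrite /bb; case: ifP. Qed.

Lemma pi4_lt n r (hn : 4 <= n) (k : 'I_r) (p : 'I_r * 'I_n) : pi4 k p < n.-1.
Proof.
rewrite /pi4; case: ifP => _; first lia.
case: ifP => _.
  have := ltn_pmod p.2 (_ : 0 < n - 2); lia.
case: ifP => _; last lia.
have : p.2 %/ (n - 2) <= 1.
  rewrite -ltnS ltn_divLR; last lia.
  have := ltn_ord p.2; lia.
lia.
Qed.

Lemma psi4_good n r (hn : 4 <= n) (hr : 3 <= r) : psi_good (@psi4 n r hr).
Proof.
split.
- move=> [i t] [j u]; rewrite /psi4 /=.
  case: (eqVneq i j) => [<-|ij] /=; first by rewrite eq_sym.
  case: ltngtP => // /val_inj E.
  by rewrite E eqxx in ij.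
- move=> i t u tu; rewrite /psi4 /= eqxx /=; case: ifP => _;
    apply/negP => /eqP /(congr1 val); rewrite toI_val ?aa_lt ?bb_lt //;
    rewrite /aa /bb /=; case: ifP => /eqP; lia.
move=> k h hi Hall.
have key : forall a b, a != b -> pi4 k (h a) != pi4 k (h b).
  move=> a b ab; have := Hall a b ab.
  have hab : h a != h b by apply: contra ab => /eqP /hi ->.
  move: hab; case: (h a) => [i t]; case: (h b) => [j u] /= hab.
  rewrite /psi4 /pi4 /=.
  case: (eqVneq i j) => [eij|ij] /=.
    subst j; have tu : t != u by apply: contra hab => /eqP ->.
    case: ifP => Hm <-.
      rewrite toI_val ?aa_lt // eq_sym.
      have -> : (aa i == i) = false by rewrite /aa; case: (nat_of_ord i) => [|[|]].
      rewrite eqxx; move: Hm; apply: contra => /eqP H; apply/eqP; lia.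
    rewrite toI_val ?bb_lt // eq_sym.
    have -> : (bb i == i) = false by rewrite /bb; case: (nat_of_ord i) => [|[|[|]]].
    have -> : (bb i == aa i) = false by rewrite /aa /bb; case: (nat_of_ord i) => [|[|[|]]].
    rewrite eqxx; move/negbFE/eqP: Hm => Hm.
    apply: contra tu => /eqP H.
    have E1 := divn_eq t (n - 2); have E2 := divn_eq u (n - 2).
    apply/eqP/val_inj => /=; lia.
  have ij' : (nat_of_ord i == nat_of_ord j) = false by apply/negbTE.
  case: ltngtP => Hij <-.
  - rewrite eqxx eq_sym ij'; case: ifP => _ //; case: ifP => //.
  - have ji' : (nat_of_ord j == nat_of_ord i) = false by rewrite eq_sym.
    rewrite eqxx ji'; case: ifP => _ //; case: ifP => //.
  - by move/val_inj: Hij => E; rewrite E eqxx in ij.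
pose f (a : 'I_n) : 'I_n.-1 := Ordinal (pi4_lt hn k (h a)).
have fi : injective f.
  move=> a b /(congr1 val) /= E; case: (eqVneq a b) => // ab.
  by move: (key a b ab); rewrite E eqxx.
have := leq_card f fi; rewrite !card_ord; lia.
Qed.

Definition tbl : seq nat := [:: 0; 1; 1; 0; 1; 0; 0; 2; 2; 1; 0; 2; 0; 0; 1; 0; 1; 1; 1; 2; 0; 0; 0; 2; 1; 1; 2; 0; 0; 0; 0; 2; 2; 1; 1; 0; 1; 0; 0; 2; 0; 0; 1; 0; 2; 0; 1; 2; 2; 0; 0; 1; 2; 0; 0; 0; 1; 1; 1; 1; 0; 0; 1; 2; 1; 1; 1; 0; 2; 0; 0; 0; 2; 1; 2; 0; 2; 0; 1; 0; 0].
Definition tb (i t j u : nat) := nth 0 tbl ((3 * i + t) * 9 + (3 * j + u)).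

Lemma tb_sym i t j u : i < 3 -> t < 3 -> j < 3 -> u < 3 -> tb i t j u = tb j u i t.
Proof.
by case: i => [|[|[|?]]] //; case: t => [|[|[|?]]] //; case: j => [|[|[|?]]] //;
   case: u => [|[|[|?]]].
Qed.

Lemma tb_lt i t j u : i < 3 -> t < 3 -> j < 3 -> u < 3 -> tb i t j u < 3.
Proof.
by case: i => [|[|[|?]]] //; case: t => [|[|[|?]]] //; case: j => [|[|[|?]]] //;
   case: u => [|[|[|?]]].
Qed.

Lemma tb_cl i t u : i < 3 -> t < 3 -> u < 3 -> t != u -> tb i t i u != i.
Proof.
by case: i => [|[|[|?]]] //; case: t => [|[|[|?]]] //; case: u => [|[|[|?]]].
Qed.

Lemma tb_free i1 t1 i2 t2 i3 t3 :
  i1 < 3 -> t1 < 3 -> i2 < 3 -> t2 < 3 -> i3 < 3 -> t3 < 3 ->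
  (i1 != i2) || (t1 != t2) -> (i1 != i3) || (t1 != t3) -> (i2 != i3) || (t2 != t3) ->
  tb i1 t1 i2 t2 = tb i1 t1 i3 t3 -> tb i1 t1 i2 t2 = tb i2 t2 i3 t3 -> False.
Proof.
case: i1 => [|[|[|?]]] //; case: t1 => [|[|[|?]]] //;
case: i2 => [|[|[|?]]] //; case: t2 => [|[|[|?]]] //;
case: i3 => [|[|[|?]]] //; case: t3 => [|[|[|?]]] //.
Qed.

Definition col (i t j u : nat) : nat :=
  if (i < 3) && (j < 3) then tb i t j u
  else if i == j then (if t + u == 1 then 1 else 0) else maxn i j.

Definition psi3 r (hr : 3 <= r) (p q : 'I_r * 'I_3) : 'I_r :=
  if (p.1 < 3) && (q.1 < 3) then toI hr (tb p.1 p.2 q.1 q.2)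
  else if p.1 == q.1 then toI hr (if p.2 + q.2 == 1 then 1 else 0)
  else (if p.1 < q.1 then q.1 else p.1).

Lemma psi3_val r (hr : 3 <= r) p q : val (psi3 hr p q) = col p.1 p.2 q.1 q.2.
Proof.
rewrite /psi3 /col; case: ifP => [/andP [h1 h2]|_].
  by rewrite toI_val // tb_lt.
case: (eqVneq p.1 q.1) => [E|E].
  by rewrite E eqxx toI_val //; case: ifP.
have E' : (nat_of_ord p.1 == q.1) = false by apply/negbTE.
rewrite E'; case: ltngtP => H //=; try lia.
Qed.

Definition colS (i t j u c : nat) : Prop :=
  [\/ [/\ i < 3, j < 3 & c < 3],
      [/\ ~~ ((i < 3) && (j < 3)), i = j & ((c = 1 /\ t + u = 1) \/ (c = 0 /\ t + u != 1))] |
      [/\ ~~ ((i < 3) && (j < 3)), i != j & c = maxn i j]].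

Lemma col_spec i t j u : t < 3 -> u < 3 -> colS i t j u (col i t j u).
Proof.
move=> ht hu; rewrite /colS /col; case: ifP => [/andP [h1 h2]|H].
  by apply: Or31; split => //; apply: tb_lt.
case: (eqVneq i j) => [E|E].
  apply: Or32; split => //.
  by case: ifP => /eqP; [left|right; split=> //; apply/eqP].
by apply: Or33.
Qed.

Lemma arith_free (i1 t1 i2 t2 i3 t3 c12 c13 c23 : nat) :
  t1 < 3 -> t2 < 3 -> t3 < 3 ->
  (i1 != i2) || (t1 != t2) -> (i1 != i3) || (t1 != t3) -> (i2 != i3) || (t2 != t3) ->
  ~~ [&& i1 < 3, i2 < 3 & i3 < 3] -> c12 = c13 -> c12 = c23 ->
  colS i1 t1 i2 t2 c12 -> colS i1 t1 i3 t3 c13 -> colS i2 t2 i3 t3 c23 -> False.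
Proof.
move=> h1 h2 h3 d12 d13 d23 nb e1 e2 s12 s13 s23.
by case: s12 => -[? ? ?]; case: s13 => -[? ? ?]; case: s23 => -[? ? ?]; lia.
Qed.

Lemma col_free i1 t1 i2 t2 i3 t3 :
  t1 < 3 -> t2 < 3 -> t3 < 3 ->
  (i1 != i2) || (t1 != t2) -> (i1 != i3) || (t1 != t3) -> (i2 != i3) || (t2 != t3) ->
  col i1 t1 i2 t2 = col i1 t1 i3 t3 -> col i1 t1 i2 t2 = col i2 t2 i3 t3 -> False.
Proof.
move=> h1 h2 h3 d12 d13 d23 e1 e2.
case: (boolP [&& i1 < 3, i2 < 3 & i3 < 3]) => [/and3P [a1 a2 a3]|nb].
  by apply: (tb_free a1 h1 a2 h2 a3 h3 d12 d13 d23); move: e1 e2; rewrite /col a1 a2 a3.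
exact: (arith_free h1 h2 h3 d12 d13 d23 nb e1 e2 (col_spec _ _ h1 h2)
          (col_spec _ _ h1 h3) (col_spec _ _ h2 h3)).
Qed.

Lemma pair_neq r (p q : 'I_r * 'I_3) :
  p != q -> (nat_of_ord p.1 != q.1) || (nat_of_ord p.2 != q.2).
Proof.
case: p q => [i t] [j u] /=; apply: contraR; rewrite negb_or !negbK.
by move=> /andP [/eqP /val_inj -> /eqP /val_inj ->].
Qed.

Lemma psi3_good r (hr : 3 <= r) : psi_good (@psi3 r hr).
Proof.
split.
- move=> [i t] [j u]; apply: val_inj; rewrite !psi3_val /= /col.
  rewrite andbC; case: ifP => [/andP [h1 h2]|_]; first by rewrite tb_sym.
  rewrite eq_sym addnC maxnC; by [].
- move=> i t u tu; apply/negP => /eqP /(congr1 val); rewrite psi3_val /= /col.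
  rewrite andbb; case: ifP => [hi|hi].
    by apply/eqP; apply: tb_cl.
  rewrite eqxx; case: ifP => _; lia.
move=> k h hi Hall.
pose o0 : 'I_3 := Ordinal (isT : 0 < 3).
pose o1 : 'I_3 := Ordinal (isT : 1 < 3).
pose o2 : 'I_3 := Ordinal (isT : 2 < 3).
have d : forall a b, a != b -> (nat_of_ord (h a).1 != (h b).1) || (nat_of_ord (h a).2 != (h b).2).
  by move=> a b ab; apply: pair_neq; apply: contra ab => /eqP /hi ->.
have e : forall a b, a != b -> col (h a).1 (h a).2 (h b).1 (h b).2 = k.
  by move=> a b ab; rewrite -psi3_val Hall.
apply: (@col_free (h o0).1 (h o0).2 (h o1).1 (h o1).2 (h o2).1 (h o2).2) => //.
- exact: d.
- exact: d.
- exact: d.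
- by rewrite !e.
- by rewrite !e.
Qed.

Definition monoK (G : sgraph) r n (c : edge_colouring G r) (i : 'I_r)
  (f : {ffun 'I_n -> svert G}) : bool :=
  injectiveb f && [forall a, forall b, (a != b) ==>
     (sadj (f a) (f b) && (sval c (f a) (f b) == i))].

Definition Acl (G : sgraph) r n (c : edge_colouring G r) (i : 'I_r) :=
  [pick f | @monoK G r n c i f].

Definition named (G : sgraph) r n (c : edge_colouring G r) (x : svert G)
  (p : 'I_r * 'I_n) : bool :=
  if Acl n c p.1 is Some f then f p.2 == x else false.

Definition name (G : sgraph) r n (c : edge_colouring G r) (x : svert G) :=
  [pick p | @named G r n c x p].

Definition cc (G : sgraph) r n (c : edge_colouring G r)
  (psi : 'I_r * 'I_n -> 'I_r * 'I_n -> 'I_r) (x y : svert G) : 'I_r :=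
  match name n c x, name n c y with
  | Some p, Some q => psi p q
  | Some p, None => p.1
  | None, Some q => q.1
  | None, None => sval c x y end.

Lemma cc_sym (G : sgraph) r n (c : edge_colouring G r) (psi : 'I_r * 'I_n -> 'I_r * 'I_n -> 'I_r) :
  (forall p q, psi p q = psi q p) -> forall x y, cc c psi x y = cc c psi y x.
Proof.
move=> Hs x y; rewrite /cc.
case: (name n c x) => [p|]; case: (name n c y) => [q|] //.
exact: (proj2_sig c).
Qed.

Lemma monoKP (G : sgraph) r n (c : edge_colouring G r) i (f : {ffun 'I_n -> svert G}) :
  monoK c i f -> injective f /\ forall a b, a != b ->
     sadj (f a) (f b) /\ sval c (f a) (f b) = i.
Proof.
case/andP=> /injectiveP Hi /forallP H; split=> // a b ab.
by move: (H a) => /forallP /(_ b) /implyP /(_ ab) /andP [-> /eqP ->].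
Qed.

Lemma name_some (G : sgraph) r n (c : edge_colouring G r) x p :
  name n c x = Some p -> exists2 f, Acl n c p.1 = Some f & f p.2 = x.
Proof.
rewrite /name; case: pickP => // q; rewrite /named.
case E: (Acl n c q.1) => [f|] // /eqP Hf [<-]; by exists f.
Qed.

Lemma name_inj (G : sgraph) r n (c : edge_colouring G r) x y p :
  name n c x = Some p -> name n c y = Some p -> x = y.
Proof.
move=> /name_some [f Hf <-] /name_some [f' Hf' <-].
by move: Hf; rewrite Hf' => -[->].
Qed.

Lemma name_A (G : sgraph) r n (c : edge_colouring G r) i f t :
  Acl n c i = Some f -> name n c (f t) != None.
Proof.
move=> Hf; rewrite /name; case: pickP => // /(_ (i, t)).
by rewrite /named /= Hf eqxx.
Qed.

Lemma A_exists (G : sgraph) r n (c : edge_colouring G r) k (g : 'I_n -> svert G) :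
  injective g -> (forall a b, a != b -> sadj (g a) (g b) /\ sval c (g a) (g b) = k) ->
  exists f, Acl n c k = Some f.
Proof.
move=> gi Hg; rewrite /Acl; case: pickP => [f _|]; first by exists f.
move=> /(_ [ffun a => g a]) H; suff: monoK c k [ffun a => g a] by rewrite H.
apply/andP; split.
  by apply/injectiveP => a b; rewrite !ffunE => /gi.
apply/forallP => a; apply/forallP => b; apply/implyP => ab.
by rewrite !ffunE; have [-> ->] := Hg a b ab; rewrite eqxx.
Qed.

Lemma lift_neq n (h : 'I_n) i : lift h i != h.
Proof. by rewrite eq_sym neq_lift. Qed.

Lemma build (G : sgraph) r n (c : edge_colouring G r) k
  (f : {ffun 'I_n -> svert G}) (g : 'I_n -> svert G) (b0 : 'I_n) :
  monoK c k f -> (forall a, a != b0 -> forall t, f t != g a) -> injective g ->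
  (forall a b, a != b -> a != b0 -> b != b0 ->
     sadj (g a) (g b) /\ sval c (g a) (g b) = k) ->
  mono_copy (gunion (K n) (K n.-1)) c.
Proof.
move=> /monoKP [fi Hf] Hd gi Hg.
exists k, (fun x : 'I_n + 'I_n.-1 => match x with inl t => f t | inr s => g (lift b0 s) end).
split.
  case=> [a|a] [b|b] /=.
  - by move/fi=> ->.
  - move=> E; have := Hd (lift b0 b) (lift_neq _ _) a; by rewrite E eqxx.
  - move=> E; have := Hd (lift b0 a) (lift_neq _ _) b; by rewrite E eqxx.
  - by move/gi/lift_inj=> ->.
case=> [a|a] [b|b] //= ab.
- exact: Hf.
- apply: Hg; [|by rewrite eq_sym neq_lift|by rewrite eq_sym neq_lift].
  by apply: contra ab => /eqP /lift_inj ->.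
Qed.

Lemma Acl_mono (G : sgraph) r n (c : edge_colouring G r) i f :
  Acl n c i = Some f -> monoK c i f.
Proof. by rewrite /Acl; case: pickP => // f' H [<-]. Qed.

Lemma main_dir (G : sgraph) r n (hn : 0 < n)
  (psi : 'I_r * 'I_n -> 'I_r * 'I_n -> 'I_r) : psi_good psi ->
  ramsey G (K n) r -> forall c : edge_colouring G r,
  mono_copy (gunion (K n) (K n.-1)) c.
Proof.
case=> Hsym Hcl Hfree HR c.
pose c' : edge_colouring G r := exist _ (cc c psi) (cc_sym c Hsym).
have [k [g [gi Hg]]] := HR c'.
have Hg' : forall a b, a != b -> cc c psi (g a) (g b) = k.
  by move=> a b ab; case: (Hg a b ab).
have Hga : forall a b, a != b -> sadj (g a) (g b).
  by move=> a b ab; case: (Hg a b ab).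
have [allN | [a0 Ha0]] : (forall a, name n c (g a) != None) \/
                         exists a0, name n c (g a0) = None.
  case: (boolP [forall a, name n c (g a) != None]) => [/forallP|/forallPn [a0 /negPn /eqP]];
  by eauto.
- pose h a := odflt (k, Ordinal hn) (name n c (g a)).
  have hE : forall a, name n c (g a) = Some (h a).
    by move=> a; rewrite /h; move: (allN a); case: (name n c (g a)).
  exfalso; apply: (Hfree k h).
    by move=> a b E; apply: gi; apply: (name_inj (hE a)); rewrite E hE.
  by move=> a b ab; have := Hg' a b ab; rewrite /cc !hE.
have [[b0 [p Hb0]] | noneN] : (exists b0 p, name n c (g b0) = Some p) \/
                              forall b, name n c (g b) = None.
  case: (boolP [exists b, name n c (g b) != None]) => [/existsP [b0]|/existsPn H].
    by case E: (name n c (g b0)) => [p|] // _; left; exists b0, p.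
  by right=> b; move: (H b) => /negPn /eqP.
- have a0b0 : a0 != b0 by apply/eqP => E; move: Ha0; rewrite E Hb0.
  have pk : p.1 = k by have := Hg' a0 b0 a0b0; rewrite /cc Ha0 Hb0.
  have [f Af fp] := name_some Hb0.
  rewrite pk in Af.
  have others : forall a, a != b0 -> name n c (g a) = None.
    move=> a ab0; case Ea: (name n c (g a)) => [q|] //; exfalso.
    have a0a : a0 != a by apply/eqP => E; move: Ha0; rewrite E Ea.
    have qk : q.1 = k by have := Hg' a0 a a0a; rewrite /cc Ha0 Ea.
    have := Hg' b0 a ltac:(by rewrite eq_sym).
    rewrite /cc Hb0 Ea.
    have pq : p.2 != q.2.
      apply: contra ab0 => /eqP E2; apply/eqP/gi.
      have pqE : p = q by case: p q pk qk E2 {Hb0 Ea fp} => [? ?] [? ?] /= -> -> ->.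
      by apply: (name_inj Ea); rewrite -pqE.
    case: p q pk qk pq {Hb0 Ea fp} => [p1 p2] [q1 q2] /= -> -> pq.
    move=> E; move: (Hcl k p2 q2 pq); by rewrite E eqxx.
  apply: (@build G r n c k f g b0 _ _ gi).
  + exact: Acl_mono.
  + move=> a ab0 t; have := name_A t Af.
    by apply: contra => /eqP ->; rewrite others.
  + move=> a b ab ab0 bb0; split; first exact: Hga.
    by have := Hg' a b ab; rewrite /cc !others.
- have Hgc : forall a b, a != b -> sadj (g a) (g b) /\ sval c (g a) (g b) = k.
    by move=> a b ab; split; [exact: Hga|have := Hg' a b ab; rewrite /cc !noneN].
  have [f Af] := A_exists gi Hgc.
  apply: (@build G r n c k f g (Ordinal hn) _ _ gi).
  + exact: Acl_mono.
  + move=> a _ t; have := name_A t Af.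
    by apply: contra => /eqP ->; rewrite noneN.
  + by move=> a b ab _ _; apply: Hgc.
Qed.

Lemma psi_exists n r (hn : 3 <= n) (hr : 3 <= r) : exists psi, @psi_good n r psi.
Proof.
case: (ltngtP n 3) => [lt|gt|eq]; first lia.
  by exists (@psi4 n r hr); apply: psi4_good.
by subst n; exists (@psi3 r hr); apply: psi3_good.
Qed.

Unset Implicit Arguments.

Theorem mainTheorem1 (n r : nat) (hn : 3 <= n) (hr : 3 <= r) :
  ramsey_equiv (K n) (gunion (K n) (K n.-1)) r.
Proof.
move=> G; split=> HR c.
  have [psi Hp] := psi_exists hn hr.
  have hn0 : 0 < n by lia.
  exact: (main_dir hn0 Hp HR c).
have [k [F [Fi HF]]] := HR c.
exists k, (fun a => F (inl a)); split.
  by move=> a b /Fi [].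
by move=> a b ab; apply: (HF (inl a) (inl b)).
Qed.
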